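(* Let $\tau$ be a face of the positive cone in $\mathbb R^n$ of dimension $t$ with $0<t\le n-1$, let $1\le p,q<\infty$, and equip $\mathbb R^n$ and $\mathbb R^{n-t}\cong\mathbb R^n/\mathbb R\tau$ with Lebesgue measure. Let $M$ be a cubically encoded persistence module over $\mathbb R^n$. If $\|M\|_p<\infty$, then $\|M/\tau\|_q=0$.
   Context: Persistence modules are functors from $\mathbb R^n$ (product order) to finite-dimensional vector spaces over a field. $M$ is cubically encoded if $M\cong M'\circ e$ for an order-preserving map $e\colon\mathbb R^n\to\mathcal P$ to a finite poset whose fibers are finite unions of cubes (products of intervals of $\mathbb R$). A face of the positive cone is $\tau=\{\sum_i a_ie_{j_i}: a_i\ge0\}$ for a set of standard basis vectors $e_{j_1},\dots,e_{j_t}$; $\mathbb R^n/\mathbb R\tau$ is identified with $\mathbb R^{n-t}$ via the remaining coordinates. The quotient restriction $M/\tau$ is the $\mathbb R^n/\mathbb R\tau$-module with $(M/\tau)_{w+\mathbb R\tau}=\varinjlim_{u\in w+\tau}M_u$, with induced structure maps. The $L^p$-Hilbert amplitude is $\|M\|_p=(\int\dim M(x)^p\,d\lambda(x))^{1/p}$, $\lambda$ Lebesgue measure. *)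

(* Defs.v *)
From HB Require Import structures.
From mathcomp Require Import all_boot all_order all_algebra.
From mathcomp Require Import all_classical all_reals all_analysis.
Set Implicit Arguments. Unset Strict Implicit. Unset Printing Implicit Defensive.
Import Order.TTheory GRing.Theory Num.Theory.
Import numFieldNormedType.Exports.
Local Open Scope classical_set_scope.
Local Open Scope ring_scope.

Section prodsf.
Local Open Scope ereal_scope.
Context d1 d2 (T1 : measurableType d1) (T2 : measurableType d2) (R : realType).
Variable m1 : {sigma_finite_measure set T1 -> \bar R}.
Variable m2 : {sigma_finite_measure set T2 -> \bar R}.

(** the product measure [m1 \x m2], repackaged so that its sigma-finiteness
    can be declared canonically *)
Definition prodsf : set (T1 * T2)%type -> \bar R := m1 \x m2.
HB.instance Definition _ := Measure.on prodsf.

Lemma prodsf_sigma_finite : sigma_finite setT prodsf.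
Proof.
have /sigma_finiteP[F [TF ndF Foo]] := sigma_finiteT m1.
have /sigma_finiteP[G [TG ndG Goo]] := sigma_finiteT m2.
exists (fun n => F n `*` G n).
 rewrite -setXTT TF TG predeqE => -[x y]; split.
    move=> [/= [n _ Fnx] [k _ Gky]]; exists (maxn n k) => //; split.
    - by move: x Fnx; exact/subsetPset/ndF/leq_maxl.
    - by move: y Gky; exact/subsetPset/ndG/leq_maxr.
  by move=> [n _ []/= ? ?]; split; exists n.
move=> k; have [? ?] := Foo k; have [? ?] := Goo k.
split; first exact: measurableX.
by rewrite /prodsf product_measure1E// lte_mul_pinfty// ge0_fin_numE.
Qed.

HB.instance Definition _ := Measure_isSigmaFinite.Build _ _ _ prodsf
  prodsf_sigma_finite.
End prodsf.

Record mspace (R : realType) := MSpace {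
  ms_disp : measure_display;
  ms_type : measurableType ms_disp;
  ms_meas : {sigma_finite_measure set ms_type -> \bar R} }.

Fixpoint lebn (R : realType) (n : nat) : mspace R :=
  match n with
  | 0 => @MSpace R _ unit (@dirac _ unit tt R)
  | m.+1 => @MSpace R _ _ (prodsf (@lebesgue_measure R) (ms_meas (lebn R m)))
  end.

Fixpoint coord (R : realType) (n : nat) : ms_type (lebn R n) -> 'I_n -> R :=
  match n return ms_type (lebn R n) -> 'I_n -> R with
  | 0 => fun _ _ => 0
  | m.+1 => fun y i =>
      if unlift ord0 i is Some j then coord y.2 j else y.1
  end.

Definition pleq (R : realType) (n : nat) (x y : 'I_n -> R) : Prop :=
  forall i, x i <= y i.

(** A functor from a poset (P, le) to finite-dimensional k-vector spaces:
    the vector space at x is the row space k^(pdim x), the structure map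
    for x <= y is the matrix [pmap h] acting on row vectors (v |-> v *m A). *)
Record pmod (k : fieldType) (P : Type) (le : P -> P -> Prop) := PMod {
  pdim : P -> nat;
  pmap : forall x y, le x y -> 'M[k]_(pdim x, pdim y);
  pmap_id : forall x (h : le x x), pmap h = 1%:M;
  pmap_comp : forall x y z (hxy : le x y) (hyz : le y z) (hxz : le x z),
      pmap hxz = pmap hxy *m pmap hyz }.
Arguments pdim {k P le}.
Arguments pmap {k P le} _ {x y}.

Definition pmod_iso (k : fieldType) (P : Type) (le : P -> P -> Prop)
    (M N : pmod k le) : Prop :=
  exists (phi : forall x, 'M[k]_(pdim M x, pdim N x))
         (psi : forall x, 'M[k]_(pdim N x, pdim M x)),
    (forall x, phi x *m psi x = 1%:M /\ psi x *m phi x = 1%:M) /\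
    (forall x y (h : le x y), pmap M h *m phi y = phi x *m pmap N h).

Section pullback.
Variables (k : fieldType) (Q P : Type) (leQ : Q -> Q -> Prop) (leP : P -> P -> Prop).
Variables (N : pmod k leP) (e : Q -> P) (mono : forall x y, leQ x y -> leP (e x) (e y)).
Definition pullback : pmod k leQ.
Proof.
refine (@PMod k Q leQ (fun x => pdim N (e x)) (fun x y h => pmap N (mono h)) _ _).
- by move=> x h; exact: pmap_id.
- by move=> x y z hxy hyz hxz; exact: pmap_comp.
Defined.
End pullback.

Definition cube (R : realType) (n : nat) (I : 'I_n -> interval R) : set ('I_n -> R) :=
  [set x | forall i, x i \in I i].

Definition fin_union_cubes (R : realType) (n : nat) (A : set ('I_n -> R)) : Prop :=
  exists (m : nat) (C : 'I_m -> 'I_n -> interval R),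
    A = [set x | exists j, cube (C j) x].

Definition cubically_encoded (k : fieldType) (R : realType) (n : nat)
    (M : pmod k (@pleq R n)) : Prop :=
  exists (d : Order.disp_t) (P : finPOrderType d) (e : ('I_n -> R) -> P)
         (mono : forall x y, pleq x y -> is_true (e x <= e y)%O)
         (N : pmod k (fun a b : P => is_true (a <= b)%O)),
    (forall p : P, fin_union_cubes (e @^-1` [set p])) /\
    pmod_iso M (pullback N mono).

Definition face (R : realType) (n : nat) (S : {set 'I_n}) : set ('I_n -> R) :=
  [set v | forall j, if j \in S then 0 <= v j else v j == 0].

Definition coset_face (R : realType) (n : nat) (S : {set 'I_n}) (x : 'I_n -> R) :
  set ('I_n -> R) := [set u | face S (fun j => u j - x j)].

(** dimension of the colimit  lim_{u in x + tau} M_u  (in \bar R, +oo if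
    infinite-dimensional): supremum of the sizes of the linearly independent
    finite families of elements of the colimit.  An element of the (directed)
    colimit is represented by a pair (u, a) with u in x + tau and a in M_u;
    a linear combination sum_i c_i [a_i] vanishes in the colimit iff
    sum_i c_i (M(u_i <= v) a_i) = 0 for some v in x + tau above all u_i. *)
Definition colim_indep (k : fieldType) (R : realType) (n : nat)
    (M : pmod k (@pleq R n)) (S : {set 'I_n}) (x : 'I_n -> R) (m : nat)
    (u : 'I_m -> 'I_n -> R) (a : forall i, 'rV[k]_(pdim M (u i))) : Prop :=
  forall c : 'I_m -> k,
    (exists (v : 'I_n -> R) (h : forall i, pleq (u i) v),
        coset_face S x v /\ \sum_i c i *: (a i *m pmap M (h i)) = 0) ->
    forall i, c i = 0.

Definition colim_dim (k : fieldType) (R : realType) (n : nat)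
    (M : pmod k (@pleq R n)) (S : {set 'I_n}) (x : 'I_n -> R) : \bar R :=
  ereal_sup [set ((m%:R : R)%:E) | m in
    [set m : nat | exists (u : 'I_m -> 'I_n -> R)
                          (a : forall i, 'rV[k]_(pdim M (u i))),
        (forall i, coset_face S x (u i)) /\ @colim_indep k R n M S x m u a]].

(** identification R^n / R tau = R^(n - t) via the coordinates outside S:
    w : 'I_#|~: S| -> R is sent to the representative with zeros on S *)
Definition lift_quot (R : realType) (n : nat) (S : {set 'I_n})
    (w : 'I_#|~: S| -> R) : 'I_n -> R :=
  fun j => (if j \in ~: S as b return (j \in ~: S) = b -> R
            then fun h => w (enum_rank_in h j) else fun _ => 0) (erefl _).

Definition quot_dim (k : fieldType) (R : realType) (n : nat)
    (M : pmod k (@pleq R n)) (S : {set 'I_n}) (w : 'I_#|~: S| -> R) : \bar R :=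
  @colim_dim k R n M S (lift_quot w).

Definition amplitude (k : fieldType) (R : realType) (n : nat)
    (M : pmod k (@pleq R n)) (p : R) : \bar R :=
  Lnorm (ms_meas (lebn R n)) p%:E (fun y => ((pdim M (coord y))%:R : R)%:E).

Definition quot_amplitude (k : fieldType) (R : realType) (n : nat)
    (M : pmod k (@pleq R n)) (S : {set 'I_n}) (q : R) : \bar R :=
  Lnorm (ms_meas (lebn R #|~: S|)) q%:E (fun y => @quot_dim k R n M S (coord y)).

(* Main.v *)
Require Import Defs.
From HB Require Import structures.
From mathcomp Require Import all_boot all_order all_algebra.
From mathcomp Require Import all_classical all_reals all_analysis.
Import Order.TTheory GRing.Theory Num.Theory.
Local Open Scope ring_scope.
Local Open Scope classical_set_scope.
From mathcomp Require Import lra.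

Definition Qc (R : realType) (m : nat) (I : 'I_m -> interval R) :
  set (ms_type (lebn R m)) := [set y : ms_type (lebn R m) | forall i, @Defs.coord R m y i \in I i].
Arguments Qc {R m}.

Lemma Qc_prop (R : realType) (m : nat) (I : 'I_m -> interval R) :
  measurable (Qc I) /\
  ms_meas (lebn R m) (Qc I) = (\prod_(i < m) lebesgue_measure [set` I i])%E.
Proof.
elim: m I => [|m IH] I.
  have -> : Qc I = setT by apply/seteqP; split => // y _ [].
  by split => //; rewrite big_ord0 /= diracE in_setT.
have -> : Qc I = [set` I ord0] `*` Qc (fun j => I (lift ord0 j)).
  apply/seteqP; split => [[y1 y2] /= H|[y1 y2] [/= H1 H2] i].
    split; first by have := H ord0; rewrite /= unlift_none.
    by move=> j; have := H (lift ord0 j); rewrite /= liftK.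
  by rewrite /=; case: unliftP => [j ->|->] //; exact: H2.
have [mQ QE] := IH (fun j => I (lift ord0 j)).
split; first exact: measurableX (measurable_itv _) mQ.
rewrite big_ord_recl -QE /=.
by rewrite /prodsf product_measure1E //; exact: measurable_itv.
Qed.

Lemma int_mono d (T : measurableType d) (R : realType) (mu : {measure set T -> \bar R})
  (f g : T -> \bar R) : (forall x, 0 <= f x)%E -> (forall x, f x <= g x)%E ->
  (\int[mu]_x f x <= \int[mu]_x g x)%E.
Proof.
move=> f0 fg.
have g0 : forall x, (0 <= g x)%E by move=> x; exact: le_trans (f0 x) (fg x).
rewrite !ge0_integralTE //; apply: ereal_sup_le => _ [h /= hf <-].
by exists h => //= x; exact: le_trans (hf x) (fg x).
Qed.

Lemma int_null d (T : measurableType d) (R : realType) (mu : {measure set T -> \bar R})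
  (f : T -> \bar R) (N : set T) : measurable N -> mu N = 0%E ->
  (forall x, 0 <= f x)%E -> (forall x, ~ N x -> f x = 0%E) ->
  (\int[mu]_x f x = 0)%E.
Proof.
move=> mN N0 f0 fN; apply/le_anti/andP; split; last exact: integral_ge0.
apply: (le_trans (@int_mono _ _ _ mu f ((fun x => `|(cst +oo) x|)%E \_ N) f0 _)).
  move=> x; rewrite /patch; case: ifPn => [_|]; first by rewrite /= leey.
  by rewrite notin_setE => /fN ->.
by rewrite -integral_mkcond integral_abs_eq0 //; exact: measurable_cst.
Qed.

Lemma iso_dim (k : fieldType) (P : Type) (le : P -> P -> Prop) (M N : pmod k le) :
  pmod_iso M N -> forall x, pdim M x = pdim N x.
Proof.
move=> [phi [psi [H _]]] x; have [H1 H2] := H x.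
apply/eqP; rewrite eqn_leq; apply/andP; split.
  by rewrite -[X in (X <= _)%N](mxrank1 k) -H1 (leq_trans (mxrankM_maxl _ _)) // rank_leq_col.
by rewrite -[X in (X <= _)%N](mxrank1 k) -H2 (leq_trans (mxrankM_maxl _ _)) // rank_leq_col.
Qed.

Lemma lift_quot_in (R : realType) (n : nat) (S : {set 'I_n}) (w : 'I_#|~: S| -> R)
  i (h : i \in ~: S) : lift_quot w i = w (enum_rank_in h i).
Proof.
have key : forall b (e : (i \in ~: S) = b),
  (if b as b0 return ((i \in ~: S) = b0 -> R) then fun h0 => w (enum_rank_in h0 i)
   else fun _ => 0) e = w (enum_rank_in h i).
  case=> e /=; last by rewrite h in e.
  by do 2 f_equal; exact: bool_irrelevance.
exact: key.
Qed.

Lemma lift_quot_S (R : realType) (n : nat) (S : {set 'I_n}) (w : 'I_#|~: S| -> R)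
  i : i \in S -> lift_quot w i = 0.
Proof.
move=> iS; have h : i \in ~: S = false by rewrite inE iS.
have key : forall b (e : (i \in ~: S) = b), b = false ->
  (if b as b0 return ((i \in ~: S) = b0 -> R) then fun h0 => w (enum_rank_in h0 i)
   else fun _ => 0) e = 0.
  by case=> e.
exact: key.
Qed.

Lemma sum_ge_term (R : realType) (I : finType) (F : I -> R) i0 :
  (forall i, 0 <= F i) -> F i0 <= \sum_i F i.
Proof. by move=> F0; rewrite (bigD1 i0) //= lerDl sumr_ge0. Qed.
Arguments sum_ge_term {R I} F i0.

Lemma bigU_mem T (I : finType) (G : I -> set T) i0 y :
  G i0 y -> (\big[setU/set0]_(i : I) G i) y.
Proof. by move=> Gy; rewrite (bigD1 i0) //=; left. Qed.

Lemma bigU_negl d (T : measurableType d) (R : realType) (mu : {measure set T -> \bar R})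
  (I : finType) (G : I -> set T) :
  (forall i, mu.-negligible (G i)) -> mu.-negligible (\big[setU/set0]_(i : I) G i).
Proof.
move=> H; apply: (big_ind (fun X => mu.-negligible X)) => //.
- exact: negligible_set0.
- by move=> X Y; exact: negligibleU.
Qed.

Lemma rv_nz (k : fieldType) (m : nat) (A : 'rV[k]_m) : A != 0 -> m != 0%N.
Proof. by case: m A => // A; rewrite thinmx0 eqxx. Qed.

Lemma prod_pos (R : realType) (I : finType) (P : pred I) (F : I -> \bar R) :
  (forall i, P i -> (0 < F i)%E) -> (0 < \prod_(i | P i) F i)%E.
Proof.
move=> H; apply: (big_ind (fun x => (0 < x)%E)) => //.
by move=> x y; exact: mule_gt0.
Qed.

Arguments Qc_prop {R m}.
Arguments int_mono {d T R} mu f g.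
Arguments int_null {d T R} mu f N.
Arguments lift_quot_in {R n S} w i h.
Arguments lift_quot_S {R n S} w i.
Arguments bigU_mem {T I} G i0 y.
Arguments bigU_negl {d T R} mu {I} G.
Arguments rv_nz {k m}.
Arguments prod_pos {R I} P F.

Theorem mainTheorem16 (k : fieldType) (R : realType) (n t : nat)
    (S : {set 'I_n}) (p q : R) (M : pmod k (@pleq R n)) :
  #|S| = t -> (0 < t)%N -> (t <= n - 1)%N ->
  1 <= p -> 1 <= q ->
  cubically_encoded M ->
  (amplitude M p < +oo)%E ->
  quot_amplitude M S q = 0%E.
Proof.
move=> St t0 _ p1 q1 [d [P [e [mono [N [fib iso]]]]]] amp.
have dimE : forall x, pdim M x = pdim N (e x) := @iso_dim _ _ _ _ _ iso.
pose sp := fun pp => cid (fib pp).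
pose mc := fun pp => proj1_sig (sp pp).
pose Cc := fun pp => proj1_sig (cid (proj2_sig (sp pp))).
have fibE : forall pp, e @^-1` [set pp] = [set x | exists j, cube (Cc pp j) x].
  by move=> pp; exact: (proj2_sig (cid (proj2_sig (sp pp)))).
clearbody Cc.
pose bval := fun b : itv_bound R => (if b is BSide _ r then `|r| else 0 : R).
have bval0 : forall b, 0 <= bval b by case=> //= *; exact: normr_ge0.
pose Bnd := \sum_(pp : P) \sum_(j < mc pp) \sum_(i < n)
   (bval (Cc pp j i).1 + bval (Cc pp j i).2).
have Bnd0 : 0 <= Bnd.
  by do 3 (apply: sumr_ge0 => ? _); rewrite addr_ge0.
have bnd_le : forall pp j i, bval (Cc pp j i).1 + bval (Cc pp j i).2 <= Bnd.
  move=> pp j i; rewrite /Bnd.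
  apply: (le_trans _ (sum_ge_term _ pp _)); last first.
    by move=> ?; do 2 (apply: sumr_ge0 => ? _); rewrite addr_ge0.
  apply: (le_trans _ (sum_ge_term _ j _)); last first.
    by move=> ?; apply: sumr_ge0 => ? _; rewrite addr_ge0.
  by apply: (le_trans _ (sum_ge_term _ i _)) => // ?; rewrite addr_ge0.
set mu := ms_meas (lebn R n).
set fM := fun y : ms_type (lebn R n) => ((pdim M (Defs.coord y))%:R : R)%:E.
have Ipfin : (\int[mu]_x (`|fM x| `^ p) < +oo)%E.
  move: amp; rewrite /amplitude unlock /= -/mu -/fM.
  have p0 : p^-1 != 0 by rewrite invr_eq0 gt_eqF // (lt_le_trans ltr01 p1).
  rewrite !ltey; apply: contra_neq => ->; by rewrite poweRyr.
have cube_fin : forall C : 'I_n -> interval R,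
    (forall x, cube C x -> pdim M x != 0%N) -> (mu (Qc C) < +oo)%E.
  move=> C HC; have [mQ _] := Qc_prop C.
  apply: le_lt_trans Ipfin.
  have -> : mu (Qc C) = (\int[mu]_x (\1_(Qc C) x)%:E)%E by rewrite integral_indic // setIT.
  apply: int_mono => x; first by rewrite /indic; case: (x \in Qc C); rewrite lee_fin.
  rewrite /indic; case: (boolP (x \in Qc C)) => hx; last by rewrite lee_fin /=; exact: powR_ge0.
  have := HC (Defs.coord x); rewrite inE in hx => /(_ hx) hd.
  rewrite /fM /= lee_fin; apply: le_trans (le1r_powR _ p1); rewrite normr_nat ler1n lt0n //.
set mu' := ms_meas (lebn R #|~: S|).
pose F := fun pp (j : 'I_(mc pp)) (i : 'I_n) =>
  if (i \in ~: S) && (lebesgue_measure [set` Cc pp j i] == 0%E)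
  then [set y : ms_type (lebn R #|~: S|) | lift_quot (Defs.coord y) i \in Cc pp j i]
  else set0.
have Fneg : forall pp j i, mu'.-negligible (F pp j i).
  move=> pp j i; rewrite /F; case: ifPn => [/andP[h /eqP h0]|_]; last exact: negligible_set0.
  pose I := fun l => if l == enum_rank_in h i then Cc pp j i else `]-oo, +oo[%O.
  have [mQ QE] := Qc_prop I.
  exists (Qc I); split => //.
    by rewrite /mu' QE (bigD1 (enum_rank_in h i)) //= /I eqxx h0 mul0e.
  move=> y /= hy l; rewrite /I; case: eqP => [->|_]; last by rewrite in_itv.
  by rewrite -lift_quot_in.
pose U := \big[setU/set0]_(pp : P) \big[setU/set0]_(j < mc pp) \big[setU/set0]_(i < n) F pp j i.
have Uneg : mu'.-negligible U.
  apply: bigU_negl => pp; apply: bigU_negl => j; apply: bigU_negl => i; exact: Fneg.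
have core : forall y, ~ U y -> @quot_dim k R n M S (Defs.coord y) = 0%E.
  move=> y nUy; rewrite /quot_dim /colim_dim.
  pose x := lift_quot (Defs.coord y).
  apply/le_anti/andP; split; last first.
    apply: ereal_sup_ubound; exists 0%N => //.
    exists (fun _ => x), (fun _ => 0); split; first by move=> [i hi]; exfalso; move: hi; by rewrite ltn0.
    by move=> c _ [i hi]; exfalso; move: hi; rewrite ltn0.
  apply: ge_ereal_sup => _ [m [u [a [hu hind]]] <-].
  case: m u a hu hind => [|m] u a hu hind; first by rewrite lee_fin.
  exfalso; apply: nUy.
  pose SS := \sum_(l < m.+1) \sum_(j < n) `|u l j|.
  have SS0 : 0 <= SS by apply: sumr_ge0 => l _; apply: sumr_ge0 => j _.
  pose R0 := 1 + Bnd + SS.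
  have uR0 : forall l j, u l j <= R0.
    move=> l j; apply: (le_trans (ler_norm _)).
    have h1 := sum_ge_term (fun j => `|u l j|) j (fun _ => normr_ge0 _).
    have h2 := sum_ge_term (fun l => \sum_(j < n) `|u l j|) l
      (fun _ => sumr_ge0 _ (fun _ _ => normr_ge0 _)).
    rewrite /= in h1 h2; rewrite /R0 /SS; lra.
  have bR0 : forall pp j i, bval (Cc pp j i).1 + bval (Cc pp j i).2 < R0.
    by move=> pp j i; have := bnd_le pp j i; rewrite /R0; lra.
  pose v := fun j => if j \in S then R0 else x j.
  have hv : forall l, pleq (u l) v.
    move=> l j; rewrite /v; case: ifPn => jS; first exact: uR0.
    have := hu l; rewrite /coset_face /face /= => /(_ j).
    by rewrite (negbTE jS) subr_eq0 => /eqP ->.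
  have hcv : coset_face S x v.
    rewrite /coset_face /face /= => j; rewrite /v; case: ifPn => jS.
      by rewrite /x lift_quot_S // subr0 jS /R0; lra.
    by rewrite (negbTE jS) subrr.
  have sum_nz : \sum_i (fun=> 1) i *: (a i *m Defs.pmap M (hv i)) != 0.
    apply/negP => /eqP hs.
    have /eqP : (1 : k) = 0 by apply: (hind (fun=> 1) _ ord0); exists v, hv; split.
    by rewrite oner_eq0.
  have dv : pdim M v != 0%N := rv_nz _ sum_nz.
  have : (e @^-1` [set e v]) v by [].
  rewrite fibE => -[j hj].
  have inf_S : forall s, s \in S -> lebesgue_measure [set` Cc (e v) j s] = +oo%E.
    move=> s sS; have := hj s; rewrite /v sS.
    have := bR0 (e v) j s.
    case: (Cc (e v) j s) => [[b1 x1|[]] [b2 y2|[]]] /=; rewrite ?in_itv /=.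
    all: try (move=> hb hin; idtac).
    - move: hin => /andP[_ /lteifW h2]; have h3 : R0 <= y2 := h2; clear h2.
      exfalso; move: hb; rewrite ltNge => /negP; apply; apply: le_trans h3 _.
      exact: le_trans (ler_norm y2) (ler_wpDl (normr_ge0 _) (lexx _)).
    - by rewrite andbF in hin.
    - by rewrite lebesgue_measure_itv /= ltry.
    - have h2 := lteifW hin; have h3 : R0 <= y2 := h2; clear h2.
      exfalso; move: hb; rewrite ltNge => /negP; apply; apply: le_trans h3 _.
      by rewrite add0r ler_norm.
    - by [].
    - by rewrite lebesgue_measure_itv.
    - by [].
    - by [].
    - by [].
  have [/existsP[i hi]|/existsPn hno] :=
    boolP [exists i, (i \in ~: S) && (lebesgue_measure [set` Cc (e v) j i] == 0%E)].
    apply: (bigU_mem _ (e v)); apply: (bigU_mem _ j); apply: (bigU_mem _ i).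
    rewrite /F hi /=; have := hj i; rewrite /v.
    by move: hi => /andP[]; rewrite inE => /negbTE -> _.
  exfalso.
  have := cube_fin (Cc (e v) j).
  have Hc : forall z, cube (Cc (e v) j) z -> pdim M z != 0%N.
    move=> z hz; have : (e @^-1` [set e v]) z by rewrite fibE; exists j.
    by rewrite /= dimE => ->; rewrite -dimE.
  move=> /(_ Hc); have [_ ->] := Qc_prop (Cc (e v) j).
  have /card_gt0P[s sS] : (0 < #|S|)%N by rewrite St.
  rewrite (bigD1 s) //= inf_S // muleC gt0_muley ?ltxx //.
  apply: prod_pos => i /= hi.
  case: (boolP (i \in S)) => iS; first by rewrite inf_S.
  have := hno i; rewrite inE iS /= => h.
  by rewrite lt0e h measure_ge0.
have [N0 [mN0 N00 UN0]] := Uneg.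
have q0 : q^-1 != 0 by rewrite invr_eq0 gt_eqF // (lt_le_trans ltr01 q1).
rewrite /quot_amplitude unlock /= -/mu' (int_null mu' _ N0) ?poweR0r //.
  by move=> y; exact: poweR_ge0.
move=> y nN; rewrite core; last by move=> /UN0.
rewrite abse0 poweR0r // gt_eqF // (lt_le_trans ltr01 q1).
by []. Qed.
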